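(* Let $Z,A\in\mathfrak m_0$ with $\mathrm{ad}_Z^2A=\nu_1A$ and $\mathrm{ad}_{JZ}^2A=\nu_2A$ (where $\nu_1,\nu_2\ge0$). Then $A$ is an eigenvector of $E_Z$, $E_{JZ}$, $S_Z$, $S_{JZ}$ with eigenvalues $\frac{\sinh\sqrt{\nu_1}}{\sqrt{\nu_1}}$, $\frac{\sinh\sqrt{\nu_2}}{\sqrt{\nu_2}}$, $\cosh\sqrt{\nu_1}$, $\cosh\sqrt{\nu_2}$ respectively, and $JA$ is an eigenvector of $E_Z$, $E_{JZ}$, $S_Z$, $S_{JZ}$ with eigenvalues $\frac{\sinh\sqrt{\nu_2}}{\sqrt{\nu_2}}$, $\frac{\sinh\sqrt{\nu_1}}{\sqrt{\nu_1}}$, $\cosh\sqrt{\nu_2}$, $\cosh\sqrt{\nu_1}$ respectively.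
   Context: Let $G$ be a simple complex algebraic group with commuting antiholomorphic involutions $\sigma,\theta$, $G_u=G^\theta$ maximal compact, $G_0=G^\sigma$, $K=G^{\sigma\theta}$, $K_0=K\cap G_0$. $\mathfrak g=\mathfrak k\oplus\mathfrak m$ is the $\pm1$-eigenspace decomposition of $\sigma\theta$, $\mathfrak m_0=\mathfrak m\cap\mathfrak g_0$. Assume $G_u/K_0$ is an irreducible Hermitian symmetric space of compact type; $\Upsilon$ is in the center of $\mathfrak k\cap\mathfrak g_0$ with $\mathrm{ad}_\Upsilon$ having eigenvalues $\pm i$ on $\mathfrak m$; $J=\mathrm{ad}_\Upsilon|_{\mathfrak m}$ (preserving $\mathfrak m_0$). For $Y\in\mathfrak m_0$: $E_Y=\sum_{n\ge0}\frac{\mathrm{ad}_Y^{2n}}{(2n+1)!}$, $S_Y=\sum_{n\ge0}\frac{\mathrm{ad}_Y^{2n}}{(2n)!}$, acting on $\mathfrak m_0$. The expression $\frac{\sinh\sqrt\nu}{\sqrt\nu}$ is interpreted as $1$ when $\nu=0$. For $Y\in\mathfrak m_0$, $\mathrm{ad}_Y^2$ is diagonalizable on $\mathfrak m_0$ with nonnegative real eigenvalues. *)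

(* Defs.v *)
From HB Require Import structures.
From mathcomp Require Import all_boot all_order all_algebra.
From mathcomp Require Import all_classical all_reals all_analysis.
Set Implicit Arguments. Unset Strict Implicit. Unset Printing Implicit Defensive.
Import Order.TTheory GRing.Theory Num.Theory.
Import numFieldNormedType.Exports.
Local Open Scope ring_scope.

Definition sinhR (R : realType) (x : R) : R := (expR x - expR (- x)) / 2.
Definition coshR (R : realType) (x : R) : R := (expR x + expR (- x)) / 2.

Definition sinhc (R : realType) (nu : R) : R :=
  if nu == 0 then 1 else sinhR (Num.sqrt nu) / Num.sqrt nu.

(* The real Lie algebra g_0 is modelled as 'rV[R]_n with a bracket [br].
   [ad br Y k X] = ad_Y^k X. *)
Definition ad (R : realType) (n : nat) (br : 'rV[R]_n -> 'rV[R]_n -> 'rV[R]_n)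
  (Y : 'rV[R]_n) (k : nat) (X : 'rV[R]_n) : 'rV[R]_n := iter k (br Y) X.

(* Partial sums of E_Y X = sum_{k>=0} ad_Y^{2k} X / (2k+1)!  *)
Definition E_partial (R : realType) (n : nat) (br : 'rV[R]_n -> 'rV[R]_n -> 'rV[R]_n)
  (Y X : 'rV[R]_n) (N : nat) : 'rV[R]_n :=
  \sum_(k < N) (((2 * k).+1)`!%:R)^-1 *: ad br Y (2 * k) X.

(* Partial sums of S_Y X = sum_{k>=0} ad_Y^{2k} X / (2k)!  *)
Definition S_partial (R : realType) (n : nat) (br : 'rV[R]_n -> 'rV[R]_n -> 'rV[R]_n)
  (Y X : 'rV[R]_n) (N : nat) : 'rV[R]_n :=
  \sum_(k < N) (((2 * k))`!%:R)^-1 *: ad br Y (2 * k) X.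

(* Structural data of the setting, restricted to the real form g_0:
   - br is a real Lie bracket on g_0 (bilinear, antisymmetric, Jacobi);
   - g_0 = k_0 (+) m_0 (row spaces K, M) is the Cartan-type decomposition
     ( [k_0,k_0] <= k_0, [k_0,m_0] <= m_0, [m_0,m_0] <= k_0 );
   - Ups lies in k_0 and is central in k_0;
   - ad_Ups preserves m_0 and has eigenvalues +-i on m (i.e. ad_Ups is
     semisimple with ad_Ups^2 = -1 on m_0). *)
Record hermitian_data (R : realType) (n : nat)
  (br : 'rV[R]_n -> 'rV[R]_n -> 'rV[R]_n) (K M : 'M[R]_n) (Ups : 'rV[R]_n)
  : Prop := HermitianData {
  hd_linl : forall (a : R) (x y z : 'rV[R]_n), br (a *: x + y) z = a *: br x z + br y z;
  hd_antisym : forall x y, br x y = - br y x;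
  hd_jacobi : forall x y z, br x (br y z) = br (br x y) z + br y (br x z);
  hd_sum : (K + M == (1%:M : 'M[R]_n))%MS;
  hd_cap : (K :&: M == (0 : 'M[R]_n))%MS;
  hd_kk : forall x y, (x <= K)%MS -> (y <= K)%MS -> (br x y <= K)%MS;
  hd_km : forall x y, (x <= K)%MS -> (y <= M)%MS -> (br x y <= M)%MS;
  hd_mm : forall x y, (x <= M)%MS -> (y <= M)%MS -> (br x y <= K)%MS;
  hd_UpsK : (Ups <= K)%MS;
  hd_Ups_central : forall x, (x <= K)%MS -> br Ups x = 0;
  hd_J2 : forall x, (x <= M)%MS -> br Ups (br Ups x) = - x
}.

(* J = ad_Ups on m_0 *)
Definition Jop (R : realType) (n : nat) (br : 'rV[R]_n -> 'rV[R]_n -> 'rV[R]_n)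
  (Ups X : 'rV[R]_n) : 'rV[R]_n := br Ups X.

(* Main.v *)
Require Import Defs.
From HB Require Import structures.
From mathcomp Require Import all_boot all_order all_algebra.
From mathcomp Require Import all_classical all_reals all_analysis.
From mathcomp Require Import ring lra.
Import Order.TTheory GRing.Theory Num.Theory.
Import numFieldNormedType.Exports.
Local Open Scope classical_set_scope.
Local Open Scope ring_scope.

Lemma double_cvg (R : realType) (u : nat -> R) (l : R) :
  u @ \oo --> l -> (fun n => u (2 * n)%N) @ \oo --> l.
Proof.
move=> hu.
have h2 : (fun n : nat => (2 * n)%N) @ \oo --> \oo.
  move=> P [N _ HP]; exists N => // m /= Hm; apply: HP.
  rewrite /= (leq_trans Hm) // leq_pmull //.
exact: (cvg_comp _ _ h2 hu).
Qed.

Lemma exp_cvg (R : realType) (s : R) : series (exp_coeff s) @ \oo --> expR s.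
Proof. exact: is_cvg_series_exp_coeff. Qed.

Lemma even_odd_sum (R : realType) (f : nat -> R) N :
  \sum_(0 <= i < (2 * N)%N) f i = \sum_(0 <= k < N) (f (2 * k)%N + f (2 * k).+1).
Proof.
elim: N => [|N IH]; first by rewrite !big_geq.
by rewrite mulnS add2n !big_nat_recr //= IH addrA.
Qed.

Lemma series_split (R : realType) (s : R) N :
  series (exp_coeff s) (2 * N)%N + series (exp_coeff (- s)) (2 * N)%N
  = 2 * \sum_(k < N) ((2 * k)`!%:R)^-1 * s ^+ (2 * k)
 /\ series (exp_coeff s) (2 * N)%N - series (exp_coeff (- s)) (2 * N)%N
  = 2 * \sum_(k < N) ((2 * k).+1`!%:R)^-1 * s ^+ (2 * k).+1.
Proof.
rewrite /series /= !even_odd_sum -big_split -sumrB !big_mkord !mulr_sumr.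
split; apply: eq_bigr => k _; rewrite /exp_coeff /=;
have e1: (-s)^+(2*k) = s^+(2*k) by rewrite !exprM sqrrN.
all: have e2: (-s)^+(2*k).+1 = - s^+(2*k).+1 by rewrite !exprS e1 mulNr.
all: rewrite e1 e2; lra.
Qed.

Lemma cosh_cvg (R : realType) (s : R) :
  (fun N => \sum_(k < N) ((2 * k)`!%:R)^-1 * s ^+ (2 * k)) @ \oo --> coshR s.
Proof.
have -> : (fun N => \sum_(k < N) ((2 * k)`!%:R)^-1 * s ^+ (2 * k)) =
  (fun N => (series (exp_coeff s) (2 * N)%N + series (exp_coeff (- s)) (2 * N)%N) / 2).
  apply/funext => N; have [-> _] := @series_split R s N; by field.
rewrite /coshR.
have h := cvgD (@double_cvg R _ _ (@exp_cvg R s)) (@double_cvg R _ _ (@exp_cvg R (- s))).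
have := cvgM (h _) (cvg_cst (2^-1 : R)).
by move=> /(_ _ _ _); apply.
Qed.

Lemma sinh_cvg (R : realType) (s : R) :
  (fun N => \sum_(k < N) ((2 * k).+1`!%:R)^-1 * s ^+ (2 * k).+1) @ \oo --> sinhR s.
Proof.
have -> : (fun N => \sum_(k < N) ((2 * k).+1`!%:R)^-1 * s ^+ (2 * k).+1) =
  (fun N => (series (exp_coeff s) (2 * N)%N - series (exp_coeff (- s)) (2 * N)%N) / 2).
  apply/funext => N; have [_ ->] := @series_split R s N; by field.
rewrite /sinhR.
have h := cvgB (@double_cvg R _ _ (@exp_cvg R s)) (@double_cvg R _ _ (@exp_cvg R (- s))).
have := cvgM (h _) (cvg_cst (2^-1 : R)).
by move=> /(_ _ _ _); apply.
Qed.

Lemma cosh_nu (R : realType) (nu : R) : 0 <= nu ->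
  (fun N => \sum_(k < N) ((2 * k)`!%:R)^-1 * nu ^+ k) @ \oo --> coshR (Num.sqrt nu).
Proof.
move=> h.
have -> : (fun N => \sum_(k < N) ((2 * k)`!%:R)^-1 * nu ^+ k) =
   (fun N => \sum_(k < N) ((2 * k)`!%:R)^-1 * (Num.sqrt nu) ^+ (2 * k)).
  by apply/funext => N; apply: eq_bigr => k _; rewrite exprM sqr_sqrtr.
exact: cosh_cvg.
Qed.

Lemma sinhc_nu (R : realType) (nu : R) : 0 <= nu ->
  (fun N => \sum_(k < N) ((2 * k).+1`!%:R)^-1 * nu ^+ k) @ \oo --> sinhc nu.
Proof.
move=> h; rewrite /sinhc; have [->|nz] := eqVneq nu 0.
  move=> P /= hP; exists 1%N => // m hm /=.
  case: m hm => [//|m] _; rewrite big_ord_recl big1 ?addr0.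
    by rewrite /= expr0 mulr1 invr1; exact: nbhs_singleton.
  by move=> i _; rewrite expr0n /= mulr0.
have sp : 0 < Num.sqrt nu by rewrite sqrtr_gt0 lt_def nz h.
have -> : (fun N => \sum_(k < N) ((2 * k).+1`!%:R)^-1 * nu ^+ k) =
   (fun N => (\sum_(k < N) ((2 * k).+1`!%:R)^-1 * (Num.sqrt nu) ^+ (2 * k).+1) * (Num.sqrt nu)^-1).
  apply/funext => N; rewrite mulr_suml; apply: eq_bigr => k _.
  by rewrite exprSr exprM sqr_sqrtr // -mulrA mulfK // gt_eqF.
have := cvgM (@sinh_cvg R (Num.sqrt nu)) (cvg_cst ((Num.sqrt nu)^-1)).
by move=> /(_ _ _ _); apply.
Qed.

Lemma ad_even (R : realType) (n : nat) (br : 'rV[R]_n -> 'rV[R]_n -> 'rV[R]_n)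
  (Y X : 'rV[R]_n) (nu : R) :
  (forall (c : R) v, br Y (c *: v) = c *: br Y v) -> ad br Y 2 X = nu *: X ->
  forall k, ad br Y (2 * k) X = nu ^+ k *: X.
Proof.
move=> hs h; elim=> [|k IH]; first by rewrite /ad /= scale1r.
rewrite /ad mulnS add2n /=. rewrite /ad in IH; rewrite IH !hs.
by move: h; rewrite /ad /= => ->; rewrite scalerA exprSr.
Qed.

Lemma series_vec (R : realType) (n : nat) (br : 'rV[R]_n -> 'rV[R]_n -> 'rV[R]_n)
  (Y X : 'rV[R]_n) (nu : R) : 0 <= nu ->
  (forall (c : R) v, br Y (c *: v) = c *: br Y v) -> ad br Y 2 X = nu *: X ->
  E_partial br Y X @ \oo --> sinhc nu *: X /\
  S_partial br Y X @ \oo --> coshR (Num.sqrt nu) *: X.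
Proof.
move=> hnu hs h; have he := @ad_even R n br Y X nu hs h.
have -> : E_partial br Y X = fun N => (\sum_(k < N) ((2 * k).+1`!%:R)^-1 * nu ^+ k) *: X.
  apply/funext => N; rewrite /E_partial scaler_suml; apply: eq_bigr => k _.
  by rewrite he scalerA.
have -> : S_partial br Y X = fun N => (\sum_(k < N) ((2 * k)`!%:R)^-1 * nu ^+ k) *: X.
  apply/funext => N; rewrite /S_partial scaler_suml; apply: eq_bigr => k _.
  by rewrite he scalerA.
split; apply: cvgZr_tmp; [exact: sinhc_nu | exact: cosh_nu].
Qed.

Section HDlemmas.
Set Implicit Arguments.
Lemma br0l (R : realType) (n : nat) br K M Ups (HD : @hermitian_data R n br K M Ups) z :
  br 0 z = 0.
Proof.
have := hd_linl HD 1 0 0 z; rewrite scaler0 addr0 scale1r => e.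
by apply: (addrI (br 0 z)); rewrite addr0 -e.
Qed.

Lemma br0r (R : realType) (n : nat) br K M Ups (HD : @hermitian_data R n br K M Ups) z :
  br z 0 = 0.
Proof. by rewrite (hd_antisym HD) (br0l HD) oppr0. Qed.

Lemma brZl (R : realType) (n : nat) br K M Ups (HD : @hermitian_data R n br K M Ups) c x z :
  br (c *: x) z = c *: br x z.
Proof. by have := hd_linl HD c x 0 z; rewrite addr0 (br0l HD) addr0. Qed.

Lemma brZr (R : realType) (n : nat) br K M Ups (HD : @hermitian_data R n br K M Ups) c x z :
  br z (c *: x) = c *: br z x.
Proof. by rewrite (hd_antisym HD) (brZl HD) -scalerN -(hd_antisym HD). Qed.

Lemma brNr (R : realType) (n : nat) br K M Ups (HD : @hermitian_data R n br K M Ups) x z :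
  br z (- x) = - br z x.
Proof. by rewrite -scaleN1r (brZr HD) scaleN1r. Qed.

Lemma brNl (R : realType) (n : nat) br K M Ups (HD : @hermitian_data R n br K M Ups) x z :
  br (- x) z = - br x z.
Proof. by rewrite -scaleN1r (brZl HD) scaleN1r. Qed.

Lemma JinM (R : realType) (n : nat) br K M Ups (HD : @hermitian_data R n br K M Ups) x :
  (x <= M)%MS -> (br Ups x <= M)%MS.
Proof. by move=> hx; apply: (hd_km HD) => //; exact: (hd_UpsK HD). Qed.

Lemma brMK (R : realType) (n : nat) br K M Ups (HD : @hermitian_data R n br K M Ups) x y :
  (x <= M)%MS -> (y <= K)%MS -> (br x y <= M)%MS.
Proof. by move=> hx hy; rewrite (hd_antisym HD) eqmx_opp; exact: (hd_km HD). Qed.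

Lemma brJ (R : realType) (n : nat) br K M Ups (HD : @hermitian_data R n br K M Ups) w x :
  (w <= M)%MS -> (x <= M)%MS -> br w (br Ups x) = - br (br Ups w) x.
Proof.
move=> hw hx; have := hd_jacobi HD Ups w x.
rewrite (hd_Ups_central HD) ?(hd_mm HD) // => e.
by apply/eqP; rewrite -subr_eq0 opprK addrC -e.
Qed.

Lemma Jbr (R : realType) (n : nat) br K M Ups (HD : @hermitian_data R n br K M Ups) w y :
  (y <= K)%MS -> br Ups (br w y) = br (br Ups w) y.
Proof. by move=> hy; rewrite (hd_jacobi HD) (hd_Ups_central HD hy) (br0r HD) addr0. Qed.
End HDlemmas.

Lemma adZ_JA (R : realType) (n : nat) br K M Ups (HD : @hermitian_data R n br K M Ups)
  (Z A : 'rV[R]_n) (nu2 : R) : (Z <= M)%MS -> (A <= M)%MS ->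
  ad br (Jop br Ups Z) 2 A = nu2 *: A ->
  ad br Z 2 (Jop br Ups A) = nu2 *: Jop br Ups A.
Proof.
rewrite /ad /Jop /= => HZ HA H2.
rewrite (brJ HD HZ HA) (brNr HD).
have hY : (br (br Ups Z) A <= K)%MS by exact: (hd_mm HD (JinM HD HZ) HA).
have e : br Ups (br Z (br (br Ups Z) A)) = nu2 *: A by rewrite (Jbr HD _ hY) H2.
by rewrite -(brZr HD) -e (hd_J2 HD) // (brMK HD HZ hY).
Qed.

Lemma adJZ_JA (R : realType) (n : nat) br K M Ups (HD : @hermitian_data R n br K M Ups)
  (Z A : 'rV[R]_n) (nu1 : R) : (Z <= M)%MS -> (A <= M)%MS ->
  ad br Z 2 A = nu1 *: A ->
  ad br (Jop br Ups Z) 2 (Jop br Ups A) = nu1 *: Jop br Ups A.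
Proof.
rewrite /ad /Jop /= => HZ HA H1.
rewrite (brJ HD (JinM HD HZ) HA) (hd_J2 HD HZ) (brNl HD) opprK.
have hY : (br Z A <= K)%MS by apply: (hd_mm HD).
by rewrite -(Jbr HD _ hY) H1 (brZr HD).
Qed.

Theorem theorem5p2 (R : realType) (n : nat)
  (br : 'rV[R]_n -> 'rV[R]_n -> 'rV[R]_n) (K M : 'M[R]_n) (Ups : 'rV[R]_n)
  (HD : hermitian_data br K M Ups)
  (Z A : 'rV[R]_n) (nu1 nu2 : R)
  (HZ : (Z <= M)%MS) (HA : (A <= M)%MS)
  (Hnu1 : 0 <= nu1) (Hnu2 : 0 <= nu2)
  (H1 : ad br Z 2 A = nu1 *: A)
  (H2 : ad br (Jop br Ups Z) 2 A = nu2 *: A) :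
  let JZ := Jop br Ups Z in
  let JA := Jop br Ups A in
  (E_partial br Z A @ \oo --> sinhc nu1 *: A
  /\ E_partial br JZ A @ \oo --> sinhc nu2 *: A
  /\ S_partial br Z A @ \oo --> coshR (Num.sqrt nu1) *: A
  /\ S_partial br JZ A @ \oo --> coshR (Num.sqrt nu2) *: A
  /\ E_partial br Z JA @ \oo --> sinhc nu2 *: JA
  /\ E_partial br JZ JA @ \oo --> sinhc nu1 *: JA
  /\ S_partial br Z JA @ \oo --> coshR (Num.sqrt nu2) *: JA
  /\ S_partial br JZ JA @ \oo --> coshR (Num.sqrt nu1) *: JA).
Proof.
move=> JZ JA.
have [a1 a2] := @series_vec R n br _ _ _ Hnu1 (fun c v => brZr HD c v _) H1.
have [b1 b2] := @series_vec R n br _ _ _ Hnu2 (fun c v => brZr HD c v _) H2.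
have [c1 c2] := @series_vec R n br _ _ _ Hnu2 (fun c v => brZr HD c v _) (adZ_JA HD HZ HA H2).
have [d1 d2] := @series_vec R n br _ _ _ Hnu1 (fun c v => brZr HD c v _) (adJZ_JA HD HZ HA H1).
by do !split.
Qed.
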